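(* For every $t>0$ and all $\alpha,\beta\ge0$ with $\alpha+\beta\ge1$ or $\alpha+\beta\le\tfrac12$, $$(t^{1-\alpha-\beta}+1)^2\,(t^{2\alpha}-1)\,(t^{2\beta}-1)\ \ge\ 16\,\alpha\beta\,(t-1)^2.$$ *)

(* Defs.v *)
From Stdlib Require Import Reals.

(* Main.v *)
Require Import Defs.
From Stdlib Require Import Reals.
From Coquelicot Require Import Coquelicot.
From Stdlib Require Import Reals Lra Psatz.
Open Scope R_scope.
Definition S z := exp z - exp (-z).
Definition C z := exp z + exp (-z).

Lemma exp_ge1 u : 0 <= u -> 1 <= exp u.
Proof. intros; pose proof (exp_ineq1_le u); lra. Qed.

Lemma exp_mono u w : u <= w -> exp u <= exp w.
Proof. intros [H|H]. left; now apply exp_increasing. subst; lra. Qed.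

Lemma S_nonneg z : 0 <= z -> 0 <= S z.
Proof. intros; unfold S. pose proof (exp_mono (-z) z ltac:(lra)); lra. Qed.

Lemma S_opp z : S (- z) = - S z.
Proof. unfold S; rewrite Ropp_involutive; ring. Qed.

Lemma C_opp z : C (- z) = C z.
Proof. unfold C; rewrite Ropp_involutive; ring. Qed.

Lemma Cmono u w : 0 <= u <= w -> C u <= C w.
Proof.
  intros [H1 H2]. unfold C; rewrite !exp_Ropp.
  pose proof (exp_ge1 u H1). pose proof (exp_mono u w H2).
  set (X := exp u) in *. set (Y := exp w) in *.
  assert (E : Y + /Y - (X + /X) = (Y-X)*(X*Y-1)/(X*Y)) by (field; lra).
  assert (0 <= (Y-X)*(X*Y-1)/(X*Y)).
  { apply Rmult_le_pos. apply Rmult_le_pos; nra. left; apply Rinv_0_lt_compat; nra. }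
  lra.
Qed.

Lemma Cscale l c : 0 <= l <= 1 -> C (l * c) <= C c.
Proof.
  intros Hl. destruct (Rle_dec 0 c).
  - apply Cmono; nra.
  - rewrite <- (C_opp (l*c)), <- (C_opp c). apply Cmono; nra.
Qed.

Lemma K l v : 0 <= v -> 0 <= l <= 1 -> S (l * v) <= l * S v.
Proof.
  intros Hv Hl.
  set (f := fun x => l * S x - S (l * x)).
  set (df := fun x => l * C x - l * C (l * x)).
  assert (Hd : forall c, Rabs (c - 0) <= v -> is_derive f c (df c)).
  { intros c _. unfold f, df, S, C. auto_derive; auto. ring. }
  destruct (MVT_cor4 f df 0 v Hd v) as [c [Hc _]].
  { rewrite Rminus_0_r, Rabs_right; lra. }
  assert (f 0 = 0) by (unfold f, S; rewrite Rmult_0_r, Ropp_0; ring).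
  assert (0 <= df c) by (unfold df; pose proof (Cscale l c Hl); nra).
  assert (0 <= f v) by nra.
  unfold f in *; lra.
Qed.
Lemma CS u w : C u * S w = S (w + u) + S (w - u).
Proof. unfold C, S, Rminus. rewrite !Ropp_plus_distr, !exp_plus, !exp_Ropp, ?Ropp_involutive, ?exp_Ropp.
  field; split; apply Rgt_not_eq, exp_pos. Qed.

Lemma SS u w : S (w + u) * S (w - u) = S w ^ 2 - S u ^ 2.
Proof. unfold C, S, Rminus. rewrite !Ropp_plus_distr, !exp_plus, !exp_Ropp, ?Ropp_involutive, ?exp_Ropp.
  field; split; apply Rgt_not_eq, exp_pos. Qed.

Lemma main_y y a b : 0 <= y -> 0 <= b <= a ->
  (1 <= a + b \/ a + b <= 1/2) ->
  C ((1 - a - b) * y) ^ 2 * S (2 * a * y) * S (2 * b * y) >= 16 * a * b * S y ^ 2.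
Proof.
  intros Hy [Hb Hab] Hs.
  destruct (Req_dec b 0) as [->|Hb0].
  { replace (2*0*y) with 0 by ring. unfold S at 2. rewrite Ropp_0. lra. }
  set (s := a + b). set (d := a - b). set (m := 2*s - 1).
  assert (Hsp : 0 < s) by (unfold s; lra).
  replace (2*a*y) with (s*y + d*y) by (unfold s, d; ring).
  replace (2*b*y) with (s*y - d*y) by (unfold s, d; ring).
  rewrite Rmult_assoc, SS.
  assert (HQ : C ((1 - a - b) * y) * S (s*y) = S y + S (m * y)).
  { rewrite CS. f_equal; f_equal; unfold m, s; ring. }
  assert (Hds : 0 <= d <= s) by (unfold d, s; lra).
  assert (Hd1 : S (d*y) <= (d/s) * S (s*y)).
  { replace (d*y) with ((d/s)*(s*y)) by (field; lra). apply K. nra.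
    split. unfold Rdiv; apply Rmult_le_pos; [lra | left; apply Rinv_0_lt_compat; lra].
    unfold Rdiv. apply (Rmult_le_reg_r s); [lra|]. rewrite Rmult_assoc, Rinv_l; lra. }
  assert (Hd0 : 0 <= S (d*y)) by (apply S_nonneg; nra).
  assert (Hss : 0 <= S (s*y)) by (apply S_nonneg; nra).
  assert (Hy0 : 0 <= S y) by (apply S_nonneg; lra).
  assert (H1 : S (d*y) * s <= d * S (s*y)).
  { apply (Rmult_le_compat_r s) in Hd1; [|lra].
    replace (d / s * S (s * y) * s) with (d * S (s*y)) in Hd1 by (field; lra). lra. }
  assert (H1' : (S (d*y) * s)^2 <= (d * S (s*y))^2).
  { apply pow_incr; split; nra. }
  assert (HQb : (1+m) * S y <= S y + S (m*y)).
  { destruct Hs as [Hs|Hs].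
    - assert (Hm : 1 <= m) by (unfold m, s in *; lra).
      assert (S y <= (1/m) * S (m*y)).
      { replace y with ((1/m)*(m*y)) at 1 by (field; lra). apply K. nra.
        split. unfold Rdiv; rewrite Rmult_1_l; left; apply Rinv_0_lt_compat; lra.
        unfold Rdiv; rewrite Rmult_1_l. apply (Rmult_le_reg_r m); [lra|]. rewrite Rinv_l; lra. }
      assert (S y * m <= S (m*y)).
      { apply (Rmult_le_compat_r m) in H; [|lra].
        replace (1 / m * S (m * y) * m) with (S (m*y)) in H by (field; lra). lra. }
      lra.
    - assert (Hm : -1 <= m <= 0) by (unfold m, s in *; lra).
      replace (m*y) with (- ((-m)*y)) by ring. rewrite S_opp.
      assert (S ((-m)*y) <= (-m) * S y) by (apply K; lra).
      lra. }
  assert (HQ0 : 0 <= (1+m) * S y) by (unfold m, s in *; nra).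
  assert (HQ2 : ((1+m) * S y)^2 <= (S y + S (m*y))^2) by (apply pow_incr; lra).
  rewrite <- HQ in HQ2.
  assert (Hab4 : 4*a*b = s^2 - d^2) by (unfold s, d; ring).
  set (CC := C ((1 - a - b) * y)) in *.
  assert (HC2 : 0 <= CC^2) by nra.
  apply Rle_ge. apply (Rmult_le_reg_l (s^2)); [nra|].
  assert (E1 : s^2 * (CC^2 * (S (s*y)^2 - S (d*y)^2)) >= CC^2 * ((s^2 - d^2) * S (s*y)^2)).
  { assert (CC^2 * (S (d * y) * s) ^ 2 <= CC^2 * (d * S (s * y)) ^ 2) by (apply Rmult_le_compat_l; lra).
    nra. }
  assert (E2 : CC^2 * ((s^2 - d^2) * S (s*y)^2) = 4*a*b * (CC * S (s*y))^2) by (rewrite Hab4; ring).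
  assert (E3 : 4*a*b*((1+m) * S y)^2 <= 4*a*b*(CC * S (s*y))^2).
  { apply Rmult_le_compat_l; [nra|lra]. }
  assert (E4 : 4*a*b*((1+m) * S y)^2 = s^2 * (16*a*b*S y^2)) by (unfold m; ring).
  lra.
Qed.
Lemma main_all y a b : 0 <= a -> 0 <= b ->
  (1 <= a + b \/ a + b <= 1/2) ->
  C ((1 - a - b) * y) ^ 2 * S (2 * a * y) * S (2 * b * y) >= 16 * a * b * S y ^ 2.
Proof.
  intros Ha Hb Hs.
  assert (Hneg : forall y', C ((1 - a - b) * y') ^ 2 * S (2 * a * y') * S (2 * b * y')
     = C ((1 - a - b) * -y') ^ 2 * S (2 * a * -y') * S (2 * b * -y')
     /\ S y' ^2 = S (-y') ^2).
  { intros y'. replace ((1 - a - b) * -y') with (-((1 - a - b) * y')) by ring.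
    replace (2*a*-y') with (-(2*a*y')) by ring. replace (2*b*-y') with (-(2*b*y')) by ring.
    rewrite C_opp, !S_opp. split; ring. }
  assert (Hy : forall y', 0 <= y' -> C ((1 - a - b) * y') ^ 2 * S (2 * a * y') * S (2 * b * y') >= 16 * a * b * S y' ^ 2).
  { intros y' Hy'. destruct (Rle_dec b a).
    - apply main_y; lra.
    - replace (1-a-b) with (1-b-a) by ring.
      replace (16*a*b) with (16*b*a) by ring.
      replace (C ((1 - b - a) * y') ^ 2 * S (2 * a * y') * S (2 * b * y')) with
        (C ((1 - b - a) * y') ^ 2 * S (2 * b * y') * S (2 * a * y')) by ring.
      apply main_y; lra. }
  destruct (Rle_dec 0 y). now apply Hy.
  destruct (Hneg y) as [E1 E2]. rewrite E1, E2. apply Hy; lra.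
Qed.

Theorem lemma3p3 (t alpha beta : R) (ht : 0 < t) (ha : 0 <= alpha) (hb : 0 <= beta)
  (hab : 1 <= alpha + beta \/ alpha + beta <= 1/2) :
  (Rpower t (1 - alpha - beta) + 1) ^ 2 * (Rpower t (2 * alpha) - 1)
    * (Rpower t (2 * beta) - 1) >= 16 * alpha * beta * (t - 1) ^ 2.
Proof.
  pose proof (main_all (ln t / 2) alpha beta ha hb hab) as H.
  set (y := ln t / 2) in *.
  assert (Ht : t = exp y * exp y) by (rewrite <- exp_plus; unfold y;
    replace (ln t / 2 + ln t / 2) with (ln t) by field; rewrite exp_ln; auto).
  unfold Rpower.
  replace ((1 - alpha - beta) * ln t) with ((1 - alpha - beta) * y + (1 - alpha - beta) * y) by (unfold y; field).
  replace (2 * alpha * ln t) with (2 * alpha * y + 2 * alpha * y) by (unfold y; field).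
  replace (2 * beta * ln t) with (2 * beta * y + 2 * beta * y) by (unfold y; field).
  rewrite !exp_plus.
  assert (HY : exp y * exp y = exp ((1 - alpha - beta) * y) * exp ((1 - alpha - beta) * y)
     * exp (2 * alpha * y) * exp (2 * beta * y)).
  { rewrite <- !exp_plus. f_equal. ring. }
  unfold C, S in H. rewrite !exp_Ropp in H.
  rewrite Ht.
  set (P := exp ((1 - alpha - beta) * y)) in *.
  set (A := exp (2 * alpha * y)) in *.
  set (B := exp (2 * beta * y)) in *.
  set (Y := exp y) in *.
  assert (P > 0) by apply exp_pos. assert (A > 0) by apply exp_pos.
  assert (B > 0) by apply exp_pos. assert (Y > 0) by apply exp_pos.
  assert (E1 : (P * P + 1) ^ 2 * (A * A - 1) * (B * B - 1) =
     (Y*Y) * ((P + / P) ^ 2 * (A - / A) * (B - / B))).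
  { rewrite HY. field. lra. }
  assert (E2 : (Y * Y - 1)^2 = (Y*Y) * (Y - /Y)^2) by (field; lra).
  rewrite E1, E2.
  apply Rle_ge. replace (16 * alpha * beta * (Y * Y * (Y - / Y) ^ 2)) with
    ((Y*Y) * (16 * alpha * beta * (Y - / Y) ^ 2)) by ring.
  apply Rmult_le_compat_l; nra.
Qed.
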